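(* Let $\zeta\in\mathbb{R}$ satisfy either $0<\zeta<\min\left\{\gamma^A_{\min},\dfrac{\gamma^S_{\min}}{\gamma^A_{\max}+\gamma^S_{\min}}\right\}$ or $\zeta\ge\gamma^A_{\max}+\gamma^S_{\max}$. Then the symmetric matrix $Z(\zeta)=(1-\zeta)R(\zeta I-\tilde A)^{-1}R^T+\zeta I$ is well defined and is either positive definite or negative definite.
   Context: $A\in\mathbb{R}^{n\times n}$ is symmetric positive definite, $B\in\mathbb{R}^{m\times n}$ has full row rank. $\widehat A\in\mathbb{R}^{n\times n}$, $\widehat S\in\mathbb{R}^{m\times m}$ are symmetric positive definite; $\tilde A=\widehat A^{-1/2}A\widehat A^{-1/2}$, $R=\widehat S^{-1/2}B\widehat A^{-1/2}$, $\tilde S=B\widehat A^{-1}B^T$. $\gamma^A_{\min},\gamma^A_{\max}$ are the extreme eigenvalues of $\widehat A^{-1}A$, and $\gamma^S_{\min},\gamma^S_{\max}$ those of $\widehat S^{-1}\tilde S$. Standing assumption: $1\in[\gamma^A_{\min},\gamma^A_{\max}]$. *)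

(* Defs.v *)
From HB Require Import structures.
From mathcomp Require Import all_boot all_order all_algebra.
From mathcomp Require Export reals.
Export Order.TTheory GRing.Theory Num.Theory.

Set Implicit Arguments.
Unset Strict Implicit.
Unset Printing Implicit Defensive.

Local Open Scope ring_scope.

Definition symmx (R : realFieldType) (k : nat) (M : 'M[R]_k) : Prop := M^T = M.

Definition posdefmx (R : realFieldType) (k : nat) (M : 'M[R]_k) : Prop :=
  forall x : 'cV[R]_k, x != 0 -> 0 < (x^T *m M *m x) 0 0.
Definition negdefmx (R : realFieldType) (k : nat) (M : 'M[R]_k) : Prop :=
  forall x : 'cV[R]_k, x != 0 -> (x^T *m M *m x) 0 0 < 0.

Definition spdmx (R : realFieldType) (k : nat) (M : 'M[R]_k) : Prop :=
  symmx M /\ posdefmx M.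

Definition extreme_eigs (R : realFieldType) (k : nat) (M : 'M[R]_k)
  (gmin gmax : R) : Prop :=
  [/\ eigenvalue M gmin, eigenvalue M gmax &
      forall g, eigenvalue M g -> gmin <= g <= gmax].

Definition is_inv_sqrt (R : realFieldType) (k : nat) (M X : 'M[R]_k) : Prop :=
  spdmx X /\ X *m X = invmx M.

(* Main.v *)
Require Import Defs.
From HB Require Import structures.
From mathcomp Require Import all_boot all_order all_algebra reals.
From mathcomp Require Import sesquilinear spectral complex.
From mathcomp Require Import ring lra.
Import Order.TTheory GRing.Theory Num.Theory Num.Def.
Local Open Scope ring_scope.

Lemma psd_eig (R : realType) n (S : 'M[R]_n) :
  S^T = S -> (forall g, eigenvalue S g -> 0 <= g) ->
  forall x : 'cV_n, 0 <= (x^T *m S *m x) 0 0.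
Proof.
move=> Ssym Sge0 x.
pose f := real_complex R.
pose Sc := map_mx f S.
have Sreal : Sc \is a mxOver Num.real.
  by apply/mxOverP => i j; rewrite mxE /= complex_real.
have Ssymc : Sc \is symmetricmx.
  apply/is_hermitianmxP; rewrite expr0 scale1r.
  apply/matrixP => i j; rewrite !mxE.
  by rewrite -[in LHS]Ssym mxE.
have Sherm := realsym_hermsym Ssymc Sreal.
have /orthomx_spectralP Seq := hermitian_normalmx Sherm.
have Pu : spectralmx Sc \is unitarymx := spectral_unitarymx Sc.
have dreal := hermitian_spectral_diag_real Sherm.
move: Seq Pu dreal.
set P := spectralmx Sc; set d := spectral_diag Sc => Seq Pu dreal.
have PSc : P *m Sc = diag_mx d *m P.
  by rewrite {1}Seq !mulmxA mulmxV ?mul1mx // spectral_unit.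
have dge0 : forall j, 0 <= d 0 j.
  move=> j; have dj_real : d 0 j \is Num.real := mxOverP dreal 0 j.
  rewrite -(RRe_real dj_real) ler0c; apply: Sge0.
  rewrite -(eigenvalue_map f) /= (RRe_real dj_real).
  apply/eigenvalueP; exists (row j P).
    by rewrite -row_mul PSc row_mul row_diag_mx -scalemxAl -rowE.
  apply/eqP => Pj0.
  have := unitarymxP Pu => /(congr1 (row j)).
  rewrite row_mul Pj0 mul0mx => /rowP /(_ j).
  by rewrite !mxE eqxx /= => /eqP; rewrite eq_sym oner_eq0.
rewrite -ler0c.
have -> : ((x^T *m S *m x) 0 0)%:C%C = ((map_mx f x)^T *m Sc *m (map_mx f x)) 0 0.
  by rewrite map_trmx -!map_mxM [RHS]mxE.
set xc := map_mx f x.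
have xcr : map_mx conjC xc^T = xc^T.
  by apply/matrixP => i j; rewrite !mxE conj_Creal //= complex_real.
rewrite Seq invmx_unitary // !mulmxA.
have -> : xc^T *m map_mx conjC P^T = map_mx conjC (P *m xc)^T.
  by rewrite trmx_mul map_mxM xcr map_trmx.
set w := P *m xc.
rewrite -mulmxA mul_mx_diag mxE; apply: sumr_ge0 => j _; rewrite !mxE.
rewrite mulrAC; apply: mulr_ge0 (dge0 j).
by rewrite mulrC mul_conjC_ge0.
Qed.

Lemma quad_lb (R : realType) n (S : 'M[R]_n) lo :
  S^T = S -> (forall g, eigenvalue S g -> lo <= g) ->
  forall x : 'cV_n, lo * (x^T *m x) 0 0 <= (x^T *m S *m x) 0 0.
Proof.
move=> Ssym Sge x.
have := @psd_eig R n (S - lo%:M) _ _ x.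
rewrite mulmxBr mulmxBl mul_mx_scalar -scalemxAl !mxE subr_ge0; apply.
  by rewrite raddfB /= tr_scalar_mx Ssym.
move=> g /eigenvalueP [v vS v0]; rewrite -(addrK lo g) subr_ge0.
apply: Sge; apply/eigenvalueP; exists v => //.
by move: vS; rewrite mulmxBr mul_mx_scalar => /eqP; rewrite subr_eq => /eqP ->; rewrite scalerDl.
Qed.

Lemma quad_ub (R : realType) n (S : 'M[R]_n) hi :
  S^T = S -> (forall g, eigenvalue S g -> g <= hi) ->
  forall x : 'cV_n, (x^T *m S *m x) 0 0 <= hi * (x^T *m x) 0 0.
Proof.
move=> Ssym Sge x.
have := @psd_eig R n (hi%:M - S) _ _ x.
rewrite mulmxBr mulmxBl mul_mx_scalar -scalemxAl !mxE subr_ge0; apply.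
  by rewrite raddfB /= tr_scalar_mx Ssym.
move=> g /eigenvalueP [v vS v0]; suff: hi - g <= hi by rewrite lerBlDr lerDl.
apply: Sge; apply/eigenvalueP; exists v => //.
move: vS; rewrite mulmxBr mul_mx_scalar => /eqP; rewrite subr_eq addrC -subr_eq => /eqP <-.
by rewrite scalerBl.
Qed.

Lemma eig_YNY (R : realType) n (Y N : 'M[R]_n) g :
  Y \in unitmx -> eigenvalue (Y *m N *m Y) g -> eigenvalue (Y *m Y *m N) g.
Proof.
move=> Yu /eigenvalueP [v vE v0]; apply/eigenvalueP; exists (v *m invmx Y).
  rewrite !mulmxA mulmxKV //; move: vE; rewrite !mulmxA => vE.
  by rewrite -(mulmxK Yu (v *m Y *m N)) vE -scalemxAl.
apply: contraNneq v0 => h; by rewrite -(mulmxKV Yu v) h mul0mx.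
Qed.

Lemma eig_YYN (R : realType) n (Y N : 'M[R]_n) g :
  Y \in unitmx -> eigenvalue (Y *m Y *m N) g -> eigenvalue (Y *m N *m Y) g.
Proof.
move=> Yu /eigenvalueP [v vE v0]; apply/eigenvalueP; exists (v *m Y).
  move: vE; rewrite !mulmxA => vE.
  by rewrite vE -scalemxAl.
apply: contraNneq v0 => h; by rewrite -(mulmxK Yu v) h mul0mx.
Qed.

Lemma sq_pos (R : realType) n (u : 'rV[R]_n) : u != 0 -> 0 < (u *m u^T) 0 0.
Proof.
have sqR : forall a : R, 0 <= a * a by move=> a; rewrite -expr2 sqr_ge0.
move=> u0; rewrite mxE lt_def psumr_neq0 /=; last by move=> j _; rewrite mxE sqR.
  apply/andP; split; last by apply: sumr_ge0 => j _; rewrite mxE sqR.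
  have [j uj] : exists j, u 0 j != 0.
    apply/existsP; apply: contraNT u0; rewrite negb_exists => /forallP h.
    by apply/eqP/rowP => j; rewrite mxE; apply/eqP; move: (h j); rewrite negbK.
  apply/hasP; exists j; first by rewrite mem_index_enum.
  by rewrite mxE /= lt_def sqR andbT mulf_neq0.
Qed.

Lemma pd_unit (R : realType) n (M : 'M[R]_n) : posdefmx M -> M \in unitmx.
Proof.
move=> Mpd; rewrite -row_free_unit -kermx_eq0; apply/negP => /negP.
move=> /rowV0Pn [v /sub_kermxP vK v0].
have vT0 : v^T != 0 by apply: contra v0 => /eqP h; rewrite -(trmxK v) h trmx0.
by have := Mpd _ vT0; rewrite trmxK vK mul0mx mxE ltxx.
Qed.

Arguments psd_eig {R n S}.
Arguments quad_lb {R n S lo}.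
Arguments quad_ub {R n S hi}.
Arguments eig_YNY {R n Y N g}.
Arguments eig_YYN {R n Y N g}.
Arguments sq_pos {R n u}.
Arguments pd_unit {R n M}.

Theorem lemma4 (R : realType) (n m : nat)
  (A Ahat : 'M[R]_n) (B : 'M[R]_(m, n)) (Shat : 'M[R]_m)
  (Ahat_isqrt : 'M[R]_n) (Shat_isqrt : 'M[R]_m)
  (gAmin gAmax gSmin gSmax zeta : R) :
  spdmx A -> \rank B = m -> spdmx Ahat -> spdmx Shat ->
  is_inv_sqrt Ahat Ahat_isqrt -> is_inv_sqrt Shat Shat_isqrt ->
  extreme_eigs (invmx Ahat *m A) gAmin gAmax ->
  extreme_eigs (invmx Shat *m (B *m invmx Ahat *m B^T)) gSmin gSmax ->
  gAmin <= 1 <= gAmax ->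
  (0 < zeta < Num.min gAmin (gSmin / (gAmax + gSmin))) \/ gAmax + gSmax <= zeta ->
  let At := Ahat_isqrt *m A *m Ahat_isqrt in
  let Rm := Shat_isqrt *m B *m Ahat_isqrt in
  (zeta%:M - At) \in unitmx /\
  (let Z := (1 - zeta) *: (Rm *m invmx (zeta%:M - At) *m Rm^T) + zeta%:M in
   symmx Z /\ (posdefmx Z \/ negdefmx Z)).
Proof.
move=> [Asym Apd] rkB [Ahsym Ahpd] [Shsym Shpd] [[Xsym Xpd] XX] [[Ysym Ypd] YY].
move=> [eAmin eAmax eAb] [eSmin eSmax eSb] /andP[gAmin1 gAmax1] hz At Rm.
set X := Ahat_isqrt in XX Xsym Xpd At Rm *.
set Y := Shat_isqrt in YY Ysym Ypd Rm *.
have Xu : X \in unitmx.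
  have : X *m X \in unitmx by rewrite XX unitmx_inv (pd_unit Ahpd).
  by rewrite unitmx_mul => /andP[].
have Yu : Y \in unitmx.
  have : Y *m Y \in unitmx by rewrite YY unitmx_inv (pd_unit Shpd).
  by rewrite unitmx_mul => /andP[].
have AtM : forall g, eigenvalue At g -> gAmin <= g <= gAmax.
  by move=> g /(eig_YNY Xu); rewrite XX => /eAb.
have Atsym : At^T = At by rewrite /At !trmx_mul Xsym Asym mulmxA.
pose N := B *m invmx Ahat *m B^T.
have RRE : Rm *m Rm^T = Y *m N *m Y.
  by rewrite /Rm /N !trmx_mul Xsym Ysym -XX !mulmxA.
have RRsym : (Rm *m Rm^T)^T = Rm *m Rm^T by rewrite trmx_mul trmxK.
have RRe : forall g, eigenvalue (Rm *m Rm^T) g -> gSmin <= g <= gSmax.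
  by move=> g; rewrite RRE => /(eig_YNY Yu); rewrite YY => /eSb.
have Bfree : row_free B by rewrite /row_free rkB.
have RRpos : forall g, eigenvalue (Rm *m Rm^T) g -> 0 < g.
  move=> g /eigenvalueP [v vE v0].
  have vR0 : v *m Rm != 0.
    rewrite /Rm !mulmxA mulmx_free_eq0 ?row_free_unit //.
    rewrite mulmx_free_eq0 // mulmx_free_eq0 ?row_free_unit //.
  have := sq_pos vR0; rewrite trmx_mul mulmxA -(mulmxA v) vE -scalemxAl mxE.
  by rewrite pmulr_lgt0 // sq_pos.
have eigS : forall g, eigenvalue (invmx Shat *m N) g -> 0 < g.
  by move=> g; rewrite -YY => /(eig_YYN Yu); rewrite -RRE => /RRpos.
have gSmin0 : 0 < gSmin by apply: eigS.
have gSmax0 : 0 < gSmax by apply: eigS.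
have zunit : (zeta%:M - At) \in unitmx.
  rewrite -row_free_unit -kermx_eq0; apply/negP => /negP.
  move=> /rowV0Pn [v /sub_kermxP vK v0].
  have : eigenvalue At zeta.
    apply/eigenvalueP; exists v => //; move: vK.
    by rewrite mulmxBr mul_mx_scalar => /eqP; rewrite subr_eq0 => /eqP <-.
  move=> /AtM /andP[h1 h2]; case: hz => [/andP[_]|]; rewrite ?lt_min; lra.
split => //.
pose K := invmx (zeta%:M - At).
have Ksym : K^T = K by rewrite /K trmx_inv raddfB /= tr_scalar_mx Atsym.
have zgA : zeta - gAmax != 0.
  case: hz => [/andP[_]|]; rewrite ?lt_min; [case/andP|]; lra.
have Keig : forall mu, eigenvalue K mu -> mu <= (zeta - gAmax)^-1.
  move=> mu /eigenvalueP [v vE v0].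
  have vv : v = mu *: (zeta *: v - v *m At).
    rewrite -{1}(mulmxKV zunit v) vE -scalemxAl mulmxBr mul_mx_scalar //.
  have mu0 : mu != 0.
    by apply: contraNneq v0 => mu0; rewrite vv mu0 scale0r.
  have : eigenvalue At (zeta - mu^-1).
    apply/eigenvalueP; exists v => //.
    rewrite scalerBl {3}vv scalerA mulVf // scale1r.
    by rewrite opprB addrC subrK.
  move=> /AtM /andP[h1 h2].
  set g := zeta - mu^-1 in h1 h2.
  have mug : mu = (zeta - g)^-1 by rewrite /g opprB addrC subrK invrK.
  have zg : zeta - g != 0 by rewrite /g opprB addrC subrK invr_eq0.
  have -> : mu = (zeta - gAmax)^-1 + (zeta - g)^-1 * (zeta - gAmax)^-1 * (g - gAmax).
    by rewrite mug; field; rewrite zg zgA.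
  rewrite gerDl; apply: mulr_ge0_le0; last by rewrite subr_le0.
  case: hz => [/andP[z0]|]; rewrite ?lt_min; [case/andP => z1 _|move=> z1].
    by rewrite mulr_le0 // invr_le0; lra.
  by rewrite mulr_ge0 // invr_ge0; lra.
move=> Z; split.
  have KK : (Rm *m K *m Rm^T)^T = Rm *m K *m Rm^T.
    by rewrite trmx_mul (trmxK Rm) (trmx_mul Rm K) Ksym mulmxA.
  by rewrite /symmx /Z raddfD /= tr_scalar_mx linearZ /= KK.
have Zq : forall x : 'cV[R]_m, (x^T *m Z *m x) 0 0 =
    (1 - zeta) * (((Rm^T *m x)^T *m K *m (Rm^T *m x)) 0 0) + zeta * (x^T *m x) 0 0.
  move=> x.
  have -> : x^T *m Z *m x = (1 - zeta) *: ((Rm^T *m x)^T *m K *m (Rm^T *m x)) + zeta *: (x^T *m x).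
    rewrite /Z mulmxDr mulmxDl mul_mx_scalar -scalemxAl -scalemxAr -scalemxAl.
    by rewrite (trmx_mul Rm^T x) (trmxK Rm) !mulmxA.
  by rewrite !mxE.
have sq : forall x : 'cV[R]_m, ((Rm^T *m x)^T *m (Rm^T *m x)) 0 0 = (x^T *m (Rm *m Rm^T) *m x) 0 0.
  by move=> x; rewrite (trmx_mul Rm^T x) (trmxK Rm) !mulmxA.
have hq := fun x => quad_ub Ksym Keig (Rm^T *m x).
have hlo := fun x => quad_lb RRsym (fun g h => proj1 (andP (RRe g h))) x.
have hhi := fun x => quad_ub RRsym (fun g h => proj2 (andP (RRe g h))) x.
have tpos : forall x : 'cV[R]_m, x != 0 -> 0 < (x^T *m x) 0 0.
  move=> x x0; have : x^T != 0 by apply: contra x0 => /eqP h; rewrite -(trmxK x) h trmx0.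
  by move/sq_pos; rewrite trmxK.
set hi := (zeta - gAmax)^-1 in hq Keig.
case: hz => [/andP[z0]|]; rewrite ?lt_min; [case/andP => z1 z2|move=> z1].
  right => x x0; rewrite Zq; have t0 := tpos x x0.
  move: (hq x) (hlo x); rewrite sq.
  move: (((Rm^T *m x)^T *m K *m (Rm^T *m x)) 0 0) => q.
  move: ((x^T *m (Rm *m Rm^T) *m x) 0 0) => s.
  move: ((x^T *m x) 0 0) t0 => t t0 hqs hst.
  have z3 : zeta * (gAmax + gSmin) < gSmin.
    by rewrite -ltr_pdivlMr //; lra.
  have hine : hi < 0 by rewrite /hi invr_lt0; lra.
  pose c := (1 - zeta) * hi * gSmin + zeta.
  have ce : c * (zeta - gAmax) = (1 - zeta) * gSmin + zeta * (zeta - gAmax).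
    by rewrite /c /hi; field.
  have c0 : c < 0 by nra.
  have p1 : (1 - zeta) * q <= (1 - zeta) * (hi * s) by rewrite ler_wpM2l //; lra.
  have p2 : (1 - zeta) * hi * s <= (1 - zeta) * hi * gSmin * t.
    rewrite -(mulrA _ gSmin); apply: ler_wnM2l => //.
    by rewrite pmulr_rle0 //; lra.
  have ct : c * t < 0 by rewrite pmulr_llt0.
  rewrite /c mulrDl in ct; rewrite mulrA in p1; lra.
left => x x0; rewrite Zq; have t0 := tpos x x0.
move: (hq x) (hhi x); rewrite sq.
move: (((Rm^T *m x)^T *m K *m (Rm^T *m x)) 0 0) => q.
move: ((x^T *m (Rm *m Rm^T) *m x) 0 0) => s.
move: ((x^T *m x) 0 0) t0 => t t0 hqs hst.
have hipos : 0 < hi by rewrite /hi invr_gt0; lra.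
pose c := (1 - zeta) * hi * gSmax + zeta.
have ce : c * (zeta - gAmax) = (1 - zeta) * gSmax + zeta * (zeta - gAmax).
  by rewrite /c /hi; field.
have c0 : 0 < c by nra.
have p1 : (1 - zeta) * (hi * s) <= (1 - zeta) * q by rewrite ler_wnM2l //; lra.
have p2 : (1 - zeta) * hi * gSmax * t <= (1 - zeta) * hi * s.
  rewrite -(mulrA _ gSmax); apply: ler_wnM2l => //.
  by rewrite nmulr_rle0 //; lra.
have ct : 0 < c * t by rewrite pmulr_lgt0.
rewrite /c mulrDl in ct; rewrite mulrA in p1; lra.
Qed.
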